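(* Let $p$ be an odd prime, $m$ and $u$ positive integers, $q=p^m$, and $v=\gcd(m,u)$. If $\frac{m}{v}\equiv 0\pmod 4$, then \[ \left|\{c\in\mathbb{F}_q : \text{the equation } X^{p^{2u}}+X=c^{p^u} \text{ has a solution } X\in\mathbb{F}_q\}\right| = p^{m-2v}. \] *)

(* Defs.v *)
From mathcomp Require Import all_boot all_order all_algebra all_field.
Set Implicit Arguments. Unset Strict Implicit. Unset Printing Implicit Defensive.
Import GRing.Theory.

(* Main.v *)
Require Import Defs.
From mathcomp Require Import all_boot all_order all_algebra all_field.
From mathcomp Require Import ring zify.
Import GRing.Theory.
Local Open Scope ring_scope.
Lemma card_im_ker (F : finFieldType) (L : F -> F)
  (hL : forall x y, L (x - y) = L x - L y) :
  (#|[set L x | x in F]| * #|[set x | L x == 0%R]|)%N = #|F|.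
Proof.
have L0 : L 0 = 0 by move: (hL 0 0); rewrite !subrr.
have LN b : L (- b) = - L b by rewrite -sub0r hL L0 sub0r.
have LD a b : L (a + b) = L a + L b by move: (hL a (-b)); rewrite opprK LN opprK.
set I := [set L x | x in F]; set K := [set x | L x == 0].
pose s y := odflt 0 [pick x | L x == y].
have sK y : y \in I -> L (s y) = y.
  rewrite /s; case: pickP => [x /eqP //| H] /imsetP [x _ Ey].
  by move: (H x); rewrite /= Ey eqxx.
have E : [set s pr.1 + pr.2 | pr in setX I K] = [set: F].
  apply/setP => x; rewrite in_setT; apply/imsetP; exists (L x, x - s (L x)).
    rewrite in_setX imset_f //= inE hL sK ?subrr //; exact: imset_f.
  by rewrite /= addrC subrK.
rewrite -cardsX -cardsT -E card_in_imset // => [[y k] [y' k']].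
rewrite !in_setX !inE /= => /andP [hy hk] /andP [hy' hk'] e.
have eyy : y = y'.
  by move: (congr1 L e); rewrite !LD !sK // (eqP hk) (eqP hk') !addr0.
by subst y'; congr pair; move/addrI: e.
Qed.

Section S.
Variables (F : finFieldType) (p : nat).
Hypothesis hp : p \in [pchar F].
Hypothesis podd : odd p.
Hypothesis pp : prime p.

Lemma pnat_pk k : [pchar F].-nat (p ^ k)%N.
Proof.
rewrite (eq_pnat _ (pcharf_eq hp)) pnatX pnat_id ?orTb //.
Qed.

Lemma frobD k (x y : F) : (x + y) ^+ (p ^ k)%N = x ^+ (p ^ k)%N + y ^+ (p ^ k)%N.
Proof. exact: exprDn_pchar (pnat_pk k). Qed.

Lemma frobN k (x : F) : (- x) ^+ (p ^ k)%N = - x ^+ (p ^ k)%N.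
Proof. exact: exprNn_pchar (pnat_pk k). Qed.

Lemma frobB k (x y : F) : (x - y) ^+ (p ^ k)%N = x ^+ (p ^ k)%N - y ^+ (p ^ k)%N.
Proof. by rewrite frobD frobN. Qed.

Lemma iterN a (x : F) k : x ^+ (p ^ a)%N = - x -> x ^+ (p ^ (a * k))%N = (-1) ^+ k * x.
Proof.
move=> hx; elim: k => [|k IH]; first by rewrite muln0 expn0 expr1 expr0 mul1r.
by rewrite mulnS expnD exprM hx frobN IH exprS !mulN1r mulNr.
Qed.

Lemma iterF a (x : F) k : x ^+ (p ^ a)%N = x -> x ^+ (p ^ (a * k))%N = x.
Proof.
move=> hx; elim: k => [|k IH]; first by rewrite muln0 expn0 expr1.
by rewrite mulnS expnD exprM hx IH.
Qed.
Lemma dvdP w j :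
  ('X^(p ^ w) + 'X : {poly F}) %| 'X^(p ^ (w * j)) - (-1) ^+ j * 'X.
Proof.
set P : {poly F} := 'X^(p ^ w) + 'X; elim: j => [|j IH]; first by rewrite muln0 expn0 expr0 mul1r subrr dvdp0.
rewrite mulnSr expnD exprM.
set A : {poly F} := 'X^(p ^ (w * j)); set n := (p ^ w)%N.
have hn : odd n by rewrite oddX podd orbT.
have hB : ((-1) ^+ j * 'X) ^+ n = (-1) ^+ j * 'X^n :> {poly F}.
  by rewrite exprMn -exprM -[(-1) ^+ (j * n)]signr_odd oddM hn andbT signr_odd.
suff H2 : P %| (A ^+ n - ((-1) ^+ j * 'X) ^+ n) + (-1) ^+ j * P.
  by move: H2; congr (_ %| _); rewrite hB /P exprS; ring.
apply: dvdp_add; last exact: dvdp_mull.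
by rewrite subrXX; apply: dvdp_mulr.
Qed.
Lemma card_ker w k : (0 < w)%N -> ~~ odd k -> #|F| = (p ^ (w * k))%N ->
  #|[set x : F | x ^+ (p ^ w) + x == 0]| = (p ^ w)%N.
Proof.
move=> w0 ek cF.
set P : {poly F} := 'X^(p ^ w) + 'X.
have hP : P %| \prod_(x <- enum F) ('X - x%:P).
  rewrite big_enum -finField_genPoly cF.
  by move: (dvdP w k); rewrite -signr_odd (negbTE ek) expr0 mul1r.
have [msk Hm] := dvdp_prod_XsubC hP.
set r := mask msk (enum F) in Hm.
have sP : size P = (p ^ w).+1.
  rewrite /P size_polyDl size_polyXn // size_polyX ltnS.
  apply: (leq_trans (prime_gt1 pp)); by rewrite -{1}(expn1 p) leq_exp2l // prime_gt1.
have sr : size r = (p ^ w)%N.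
  by move: (eqp_size Hm); rewrite sP size_prod_XsubC => -[].
have -> : [set x : F | x ^+ (p ^ w) + x == 0] = [set x in r].
  apply/setP => x; rewrite !inE -root_prod_XsubC -(eqp_root Hm) /root /P.
  by rewrite !hornerE.
rewrite cardsE -sr; apply/card_uniqP.
by rewrite mask_uniq // enum_uniq.
Qed.
End S.

Theorem lemma13 (F : finFieldType) (p m u : nat) :
  prime p -> odd p -> (0 < m)%N -> (0 < u)%N ->
  #|F| = (p ^ m)%N ->
  ((m %/ gcdn m u) %% 4 = 0)%N ->
  #|[set c : F | [exists x : F, x ^+ (p ^ (2 * u)) + x == c ^+ (p ^ u)]]|
    = (p ^ (m - 2 * gcdn m u))%N.
Proof.
move=> pp po m0 u0 cF h4.
have hp : p \in [pchar F] := card_finPcharP cF pp.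
set v := gcdn m u.
have v0 : (0 < v)%N by rewrite gcdn_gt0 m0.
set m' := (m %/ v)%N; set u' := (u %/ v)%N.
have em : m = (m' * v)%N by rewrite divnK // dvdn_gcdl.
have eu : u = (u' * v)%N by rewrite divnK // dvdn_gcdr.
have [km kn E1 _] := egcdnP m u0.
rewrite gcdnC -/v in E1.
have E2 : (km * u' = kn * m' + 1)%N.
  move: E1; rewrite {1}eu {1}em => E1; nia.
have em' : m' = (m' %/ 4 * 4)%N by rewrite [LHS](divn_eq m' 4) h4 addn0.
set s := (m' %/ 4)%N in em'.
have oku : odd km && odd u'.
  by rewrite -oddM E2 em' oddD mulnA oddM /= andbF.
move/andP: oku => [okm ou].
have s0 : (0 < s)%N.
  by move: m0; rewrite em em'; case: (s) => //.
have Fm (y : F) : y ^+ (p ^ m)%N = y by rewrite -cF expf_card.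
have EK : [set x : F | x ^+ (p ^ (2 * u)) + x == 0]
        = [set x : F | x ^+ (p ^ (2 * v)) + x == 0].
  apply/setP => x; rewrite !inE !addr_eq0; apply/eqP/eqP => hx.
    have h1 := @iterN _ _ hp pp _ _ km hx.
    rewrite -signr_odd okm expr1 mulN1r in h1.
    rewrite -h1 (_ : (2 * u * km = 2 * v + m * (2 * kn))%N); last first.
      by rewrite -mulnA (mulnC u) E1; nia.
    by rewrite expnD exprM (@iterF _ _ _ _ _ (Fm _)).
  have h1 := @iterN _ _ hp pp _ _ u' hx.
  rewrite -signr_odd ou expr1 mulN1r in h1.
  have -> : (2 * u = 2 * v * u')%N by rewrite {1}eu; nia.
  exact: h1.
have cK : #|[set x : F | x ^+ (p ^ (2 * u)) + x == 0]| = (p ^ (2 * v))%N.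
  rewrite EK; apply: (@card_ker F p po pp _ (2 * s)%N).
  - by rewrite muln_gt0 v0.
  - by rewrite oddM.
  - by rewrite cF em em'; congr (_ ^ _)%N; ring.
pose L := fun x : F => x ^+ (p ^ (2 * u)) + x.
pose f := fun c : F => c ^+ (p ^ u).
have hL : forall x y, L (x - y) = L x - L y.
  by move=> x y; rewrite /L frobB //; ring.
have finj : injective f.
  move=> c d; rewrite /f => /eqP; rewrite -subr_eq0 -frobB // expf_eq0 subr_eq0.
  by case/andP => _ /eqP.
have CI := @card_im_ker F L hL.
have ES : f @: [set c : F | [exists x : F, x ^+ (p ^ (2 * u)) + x == c ^+ (p ^ u)]]
        = [set L x | x in F].
  apply/setP => y; apply/imsetP/imsetP.
    by case=> c; rewrite inE => /existsP [x /eqP hx] ->; exists x.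
  case=> x _ ->.
  have /codomP [c hc] := inj_card_onto finj (leqnn _) (L x).
  exists c; last exact: hc.
  by rewrite inE; apply/existsP; exists x; move: hc; rewrite /L /f => <-.
rewrite -(card_imset _ finj) ES.
have pv : (0 < p ^ (2 * v))%N by rewrite expn_gt0 prime_gt0.
have h2 : (2 <= s * 4)%N by clear -s0; lia.
have {}CI : (#|[set L x | x in F]| * (p ^ (2 * v)))%N = (p ^ (m - 2 * v) * p ^ (2 * v))%N.
  rewrite -expnD subnK; last first.
    by rewrite em em' mulnC (mulnC (s * 4)) leq_mul2l h2 orbT.
  by rewrite -cF -CI -cK.
by apply/eqP; rewrite -(eqn_pmul2r pv) CI.
Qed.
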